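(* Let $T$ be a decomposition tree of a distance-hereditary graph $G$, and let $v$ be an internal node of $T$ labeled $\otimes$ with left child $v_l$ and right child $v_r$, such that property (P) holds at $v_l$ and at $v_r$. Then $\hat\gamma_0(v)=\min\{\hat\gamma_i(v_l)+\hat\gamma_i(v_r) : 0\le i\le \min\{|\hat{TS}(v_l)|,|\hat{TS}(v_r)|\}\}$.
   Context: All graphs are finite, simple, undirected. For a graph $H$ and $S\subseteq V(H)$, $N_H[S]$ is $S$ together with all vertices adjacent to a vertex of $S$, and $H[S]$ is the induced subgraph. Graphs carry a ''twin set'': a single-vertex graph on $x$ has twin set $\{x\}$. For vertex-disjoint graphs $G_l,G_r$ with twin sets $TS(G_l),TS(G_r)$: the true twin operation $G_l\otimes G_r$ has vertex set $V(G_l)\cup V(G_r)$, edge set $E(G_l)\cup E(G_r)\cup\{uw: u\in TS(G_l), w\in TS(G_r)\}$ and twin set $TS(G_l)\cup TS(G_r)$; the false twin operation $G_l\odot G_r$ has vertex set $V(G_l)\cup V(G_r)$, edge set $E(G_l)\cup E(G_r)$, twin set $TS(G_l)\cup TS(G_r)$; the attachment operation $G_l\oplus G_r$ has the same vertex and edge sets as $G_l\otimes G_r$ and twin set $TS(G_l)$. A decomposition tree $T$ of $G$ is a rooted binary tree whose leaves are in bijection with $V(G)$, each internal node having a left and a right child and a label in $\{\otimes,\odot,\oplus\}$; for each node $v$ define $\hat G(v)$ and $\hat{TS}(v)$ recursively: for a leaf $x$, the single-vertex graph on $x$ with twin set $\{x\}$; for an internal node $v$ with label $\circ$ and children $v_l,v_r$,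 $\hat G(v)=\hat G(v_l)\circ\hat G(v_r)$ with the corresponding twin set; one requires $\hat G(\text{root})=G$. Then $\hat G(v)$ is the subgraph of $G$ induced by the set $\hat V(v)$ of leaves below $v$. For a node $u$ and $0\le k\le|\hat{TS}(u)|$, call $S\subseteq\hat V(u)$ $k$-feasible if $\hat V(u)\setminus\hat{TS}(u)\subseteq N_{\hat G(u)}[S]$ and there is $X\subseteq S\cap\hat{TS}(u)$ with $|X|=k$ such that $\hat G(u)[S\setminus X]$ has a perfect matching. $\hat\gamma_k(u)$ is the minimum size of a $k$-feasible set. $\hat{min}(u)=\min\{\hat\gamma_k(u):0\le k\le|\hat{TS}(u)|\}$, and $\hat\alpha(u)$, $\hat\beta(u)$ are the smallest and the largest $k$ with $\hat\gamma_k(u)=\hat{min}(u)$. Property (P) holds at $u$ if for every $0\le k\le|\hat{TS}(u)|$: $\hat\gamma_k(u)=\hat{min}(u)+\hat\alpha(u)-k$ when $k\le\hat\alpha(u)$; $\hat\gamma_k(u)=\hat{min}(u)+k-\hat\beta(u)$ when $k\ge\hat\beta(u)$; $\hat\gamma_k(u)=\hat{min}(u)$ when $\hat\alpha(u)<k<\hat\beta(u)$ and $k-\hat\alpha(u)$ is even; and $\hat\gamma_k(u)=\hat{min}(u)+1$ otherwise. *)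

(* Defs.v *)
From mathcomp Require Import all_boot.
Set Implicit Arguments. Unset Strict Implicit. Unset Printing Implicit Defensive.

(* p is a walk from x to y (of length size p) in the induced subgraph G[S] *)
Definition walk_in (V : finType) (G : rel V) (S : {set V}) (x y : V) (p : seq V) : bool :=
  (x \in S) && path (fun a b => G a b && (b \in S)) x p && (last x p == y).

Definition is_dist (V : finType) (G : rel V) (S : {set V}) (x y : V) (d : nat) : Prop :=
  (exists p, walk_in G S x y p /\ size p = d) /\
  (forall p, walk_in G S x y p -> d <= size p).

Definition distance_hereditary (V : finType) (G : rel V) : Prop :=
  forall (S : {set V}) (x y : V), x \in S -> y \in S ->
    (exists p, walk_in G S x y p) ->
    forall d, is_dist G S x y d -> is_dist G setT x y d.

Inductive op := OTrue (* ⊗ *) | OFalse (* ⊙ *) | OAttach (* ⊕ *).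

Definition op_eqb (a b : op) : bool :=
  match a, b with
  | OTrue, OTrue | OFalse, OFalse | OAttach, OAttach => true
  | _, _ => false
  end.

Inductive dtree (V : Type) :=
  | Leaf of V
  | Node of op & dtree V & dtree V.
Arguments Leaf {V}.
Arguments Node {V}.

Fixpoint leaves (V : Type) (t : dtree V) : seq V :=
  match t with
  | Leaf x => [:: x]
  | Node _ l r => leaves l ++ leaves r
  end.

Section Hat.
Variable V : finType.

Definition hV (t : dtree V) : {set V} := [set x | x \in leaves t].

Fixpoint hTS (t : dtree V) : {set V} :=
  match t with
  | Leaf x => [set x]
  | Node OAttach l _ => hTS l
  | Node _ l r => hTS l :|: hTS r
  end.

Fixpoint hE (t : dtree V) : rel V :=
  match t with
  | Leaf _ => fun _ _ => false
  | Node o l r => fun x y =>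
      [|| hE l x y, hE r x y |
       ~~ op_eqb o OFalse &&
       (((x \in hTS l) && (y \in hTS r)) || ((y \in hTS l) && (x \in hTS r)))]
  end.

End Hat.

Fixpoint is_subtree (V : Type) (s t : dtree V) : Prop :=
  s = t \/ match t with
           | Leaf _ => False
           | Node _ l r => is_subtree s l \/ is_subtree s r
           end.

Definition decomp_tree (V : finType) (G : rel V) (T : dtree V) : Prop :=
  uniq (leaves T) /\ (forall x, x \in leaves T) /\ (forall x y, G x y = hE T x y).

Definition has_pm (V : finType) (E : rel V) (W : {set V}) : bool :=
  [exists M : {set {set V}},
     [forall e in M, [exists x, [exists y,
        [&& x \in W, y \in W, x != y, E x y & e == [set x; y]]]]]
     && [forall w in W, #|[set e in M | w \in e]| == 1]].

Definition closedN (V : finType) (u : dtree V) (S : {set V}) : {set V} :=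
  [set x in hV u | (x \in S) || [exists y in S, hE u x y]].

Definition feasible (V : finType) (u : dtree V) (k : nat) (S : {set V}) : bool :=
  [&& S \subset hV u,
      (hV u :\: hTS u) \subset closedN u S &
      [exists X : {set V},
         [&& X \subset S :&: hTS u, #|X| == k & has_pm (hE u) (S :\: X)]]].

(* \hat\gamma_k(u), with None = +infinity (no k-feasible set) *)
Definition gamma (V : finType) (u : dtree V) (k : nat) : option nat :=
  if [exists S, feasible u k S]
  then Some (\big[minn/#|V|]_(S | feasible u k S) #|S|)
  else None.

Definition omin (a b : option nat) : option nat :=
  match a, b with
  | Some m, Some n => Some (minn m n)
  | Some m, None => Some m
  | None, b => b
  end.

Definition oadd (a b : option nat) : option nat :=
  match a, b with
  | Some m, Some n => Some (m + n)
  | _, _ => None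
  end.

Definition oaddn (a : option nat) (n : nat) : option nat := omap (fun m => m + n) a.

Definition hmin (V : finType) (u : dtree V) : option nat :=
  foldr omin None [seq gamma u k | k <- iota 0 #|hTS u|.+1].

Definition argmins (V : finType) (u : dtree V) : seq nat :=
  [seq k <- iota 0 #|hTS u|.+1 | gamma u k == hmin u].

Definition halpha (V : finType) (u : dtree V) : nat := head 0 (argmins u).
Definition hbeta (V : finType) (u : dtree V) : nat := last 0 (argmins u).

Definition propP (V : finType) (u : dtree V) : Prop :=
  forall k, k <= #|hTS u| ->
    (k <= halpha u -> gamma u k = oaddn (hmin u) (halpha u - k)) /\
    (hbeta u <= k -> gamma u k = oaddn (hmin u) (k - hbeta u)) /\
    (halpha u < k < hbeta u -> ~~ odd (k - halpha u) -> gamma u k = hmin u) /\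
    (halpha u < k < hbeta u -> odd (k - halpha u) -> gamma u k = oaddn (hmin u) 1).

(* Main.v *)
Require Import Defs.
From mathcomp Require Import all_boot.
Set Implicit Arguments. Unset Strict Implicit. Unset Printing Implicit Defensive.

Lemma disjointP (T : finType) (A B : {set T}) :
  reflect (forall x, x \in A -> x \in B -> False) [disjoint A & B].
Proof.
rewrite disjoint_subset; apply: (iffP subsetP) => h x xa.
- by move: (h x xa); rewrite inE => /negP.
- by rewrite inE; apply/negP => /(h x xa).
Qed.

Definition ispm (V : finType) (E : rel V) (W : {set V}) (M : {set {set V}}) : bool :=
  [forall e in M, [exists x, [exists y,
        [&& x \in W, y \in W, x != y, E x y & e == [set x; y]]]]]
     && [forall w in W, #|[set e in M | w \in e]| == 1].

Lemma has_pmE (V : finType) (E : rel V) W : has_pm E W = [exists M, ispm E W M].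
Proof. by []. Qed.

Lemma ispmP (V : finType) (E : rel V) W M :
  ispm E W M <->
  ((forall e, e \in M -> exists x y, [/\ x \in W, y \in W, x != y, E x y & e = [set x; y]]) /\
   (forall w, w \in W -> #|[set e in M | w \in e]| = 1)).
Proof.
split.
- case/andP=> /forallP h1 /forallP h2; split.
  + move=> e eM; move: (h1 e); rewrite eM /= => /existsP [x /existsP [y]].
    by case/and5P=> a b c d /eqP f; exists x, y.
  + by move=> w wW; move: (h2 w); rewrite wW /= => /eqP.
- case=> h1 h2; apply/andP; split; apply/forallP => z; apply/implyP => zin.
  + have [x [y [a b c d f]]] := h1 z zin.
    by apply/existsP; exists x; apply/existsP; exists y; rewrite a b c d f eqxx.
  + by rewrite h2.
Qed.

Lemma pm_uniq (V : finType) (E : rel V) W M w e1 e2 :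
  ispm E W M -> w \in W -> e1 \in M -> e2 \in M -> w \in e1 -> w \in e2 -> e1 = e2.
Proof.
case/ispmP=> _ h wW e1M e2M w1 w2; move: (h w wW) => /eqP /cards1P [e he].
have: e1 \in [set e in M | w \in e] by rewrite inE e1M w1.
have: e2 \in [set e in M | w \in e] by rewrite inE e2M w2.
by rewrite he !inE => /eqP -> /eqP ->.
Qed.

Lemma pm_ex (V : finType) (E : rel V) W M w :
  ispm E W M -> w \in W -> exists2 e, e \in M & w \in e.
Proof.
case/ispmP=> _ h wW; move: (h w wW) => /eqP /cards1P [e he].
have: e \in [set e in M | w \in e] by rewrite he set11.
by rewrite inE => /andP [a b]; exists e.
Qed.

Lemma pm0 (V : finType) (E : rel V) : has_pm E set0.
Proof.
rewrite has_pmE; apply/existsP; exists set0; apply/ispmP; split.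
  by move=> e; rewrite inE.
by move=> w; rewrite inE.
Qed.

Lemma pm2 (V : finType) (E : rel V) x y : x != y -> E x y -> has_pm E [set x; y].
Proof.
move=> nxy Exy; rewrite has_pmE; apply/existsP; exists [set [set x; y]]; apply/ispmP; split.
  by move=> e; rewrite inE => /eqP ->; exists x, y; rewrite !inE !eqxx orbT.
move=> w wW; apply/eqP/cards1P; exists [set x; y]; apply/setP => e.
rewrite !inE; case: eqP => [->|] //=.
Qed.

Lemma pm_union (V : finType) (E : rel V) (W1 W2 : {set V}) :
  [disjoint W1 & W2] -> has_pm E W1 -> has_pm E W2 -> has_pm E (W1 :|: W2).
Proof.
move=> dis; rewrite !has_pmE => /existsP [M1 pm1] /existsP [M2 pm2].
apply/existsP; exists (M1 :|: M2).
have [a1 b1] := iffLR (ispmP _ _ _) pm1; have [a2 b2] := iffLR (ispmP _ _ _) pm2.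
apply/ispmP; split.
  move=> e; rewrite inE => /orP [/a1|/a2] [x [y [p q r s t]]]; exists x, y;
  by rewrite !inE ?p ?q ?orbT.
move=> w; rewrite inE => /orP [wW|wW].
- have nw: forall e, e \in M2 -> w \notin e.
    move=> e /a2 [x [y [p q _ _ ->]]]; rewrite !inE; apply/negP => /orP [/eqP ex|/eqP ey]; subst w.
    + exact: (disjointP _ _ dis x wW p).
    + exact: (disjointP _ _ dis y wW q).
  rewrite -(b1 w wW); apply: eq_card => e; rewrite !inE; case eM2: (e \in M2); last by rewrite orbF.
  by move/negbTE: (nw e eM2) => ->; rewrite !andbF.
- have nw: forall e, e \in M1 -> w \notin e.
    move=> e /a1 [x [y [p q _ _ ->]]]; rewrite !inE; apply/negP => /orP [/eqP ex|/eqP ey]; subst w.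
    + exact: (disjointP _ _ dis x p wW).
    + exact: (disjointP _ _ dis y q wW).
  rewrite -(b2 w wW); apply: eq_card => e; rewrite !inE; case eM1: (e \in M1) => //=.
  by move/negbTE: (nw e eM1) => ->; rewrite !andbF.
Qed.

Lemma pm_mono (V : finType) (E1 E2 : rel V) (W : {set V}) :
  (forall x y, x \in W -> y \in W -> E1 x y -> E2 x y) -> has_pm E1 W -> has_pm E2 W.
Proof.
move=> h; rewrite !has_pmE => /existsP [M /ispmP [a b]]; apply/existsP; exists M.
apply/ispmP; split=> // e /a [x [y [p q r s t]]]; exists x, y; split=> //; exact: h.
Qed.

Lemma pm_cross (V : finType) (E : rel V) (TA TB : {set V}) :
  (forall x y, x \in TA -> y \in TB -> E x y) ->
  forall n (XA XB : {set V}), #|XA| = n -> #|XB| = n -> XA \subset TA -> XB \subset TB ->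
  [disjoint XA & XB] -> has_pm E (XA :|: XB).
Proof.
move=> hE; elim=> [|n IH] XA XB cA cB sA sB dis.
  by move/eqP: cA; rewrite cards_eq0 => /eqP ->; move/eqP: cB; rewrite cards_eq0 => /eqP ->; rewrite setU0; exact: pm0.
have [x xA] : exists x, x \in XA by apply/set0Pn; rewrite -card_gt0 cA.
have [y yB] : exists y, y \in XB by apply/set0Pn; rewrite -card_gt0 cB.
have nxy : x != y by apply/eqP => exy; subst y; exact: (disjointP _ _ dis x xA yB).
have -> : XA :|: XB = [set x; y] :|: ((XA :\ x) :|: (XB :\ y)).
  apply/setP => z; rewrite !inE; case: (z =P x) => [->|nzx]; first by rewrite xA.
  case: (z =P y) => [->|nzy]; first by rewrite yB !orbT.
  by rewrite /=.
apply: pm_union.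
- apply/disjointP => z; rewrite !inE => /orP [] /eqP ->.
  + by rewrite eqxx /= => /andP [_ xB]; exact: (disjointP _ _ dis x xA xB).
  + by rewrite eqxx /= ?andbF ?orbF => /andP [_ yA]; exact: (disjointP _ _ dis y yA yB).
- by apply: pm2 => //; apply: hE; [exact: (subsetP sA) | exact: (subsetP sB)].
- apply: IH.
  + by move: cA; rewrite (cardsD1 x) xA => -[].
  + by move: cB; rewrite (cardsD1 y) yB => -[].
  + exact: subset_trans (subsetDl _ _) sA.
  + exact: subset_trans (subsetDl _ _) sB.
  + apply/disjointP => z; rewrite !inE => /andP [_ z1] /andP [_ z2].
    exact: (disjointP _ _ dis z z1 z2).
Qed.

Definition setting (V : finType) (A B TA TB : {set V}) (EA EB E : rel V) :=
  [/\ [disjoint A & B], TA \subset A, TB \subset B &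
   [/\ (forall x y, EA x y -> (x \in A) && (y \in A)),
      (forall x y, EB x y -> (x \in B) && (y \in B)) &
      (forall x y, E x y = [|| EA x y, EB x y | ((x \in TA) && (y \in TB)) || ((y \in TA) && (x \in TB))])]].

Lemma setting_sym (V : finType) (A B TA TB : {set V}) (EA EB E : rel V) :
  setting A B TA TB EA EB E -> setting B A TB TA EB EA E.
Proof.
case=> d sA sB [hA hB hE]; split=> //; last split=> //; first by rewrite disjoint_sym.
move=> x y; rewrite hE.
by case: (EA x y); case: (EB x y); case: (x \in TA); case: (y \in TB); case: (y \in TA); case: (x \in TB).
Qed.

Definition feas (V : finType) (A TA : {set V}) (E : rel V) k (S : {set V}) : bool :=
  [&& S \subset A,
      (A :\: TA) \subset [set x in A | (x \in S) || [exists y in S, E x y]] &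
      [exists X : {set V},
         [&& X \subset S :&: TA, #|X| == k & has_pm E (S :\: X)]]].

Definition Mpart (V : finType) (M : {set {set V}}) (A : {set V}) := [set e in M | e \subset A].
Definition Xof (V : finType) (M : {set {set V}}) (A S : {set V}) :=
  [set x in S :&: A | [forall e in Mpart M A, x \notin e]].

Lemma build (V : finType) (A B TA TB : {set V}) (EA EB E : rel V) i SA SB :
  setting A B TA TB EA EB E -> feas A TA EA i SA -> feas B TB EB i SB ->
  feas (A :|: B) (TA :|: TB) E 0 (SA :|: SB).
Proof.
case=> d sTA sTB [hA hB hE].
case/and3P=> sA dA /existsP [XA /and3P [xA /eqP cA pA]].
case/and3P=> sB dB /existsP [XB /and3P [xB /eqP cB pB]].
have EAE x y : EA x y -> E x y by rewrite hE => ->.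
have EBE x y : EB x y -> E x y by rewrite hE => ->; rewrite orbT.
have inA z : z \in SA -> z \in A by move/(subsetP sA).
have inB z : z \in SB -> z \in B by move/(subsetP sB).
have XAS z : z \in XA -> z \in SA by move/(subsetP xA); rewrite inE => /andP [].
have XBS z : z \in XB -> z \in SB by move/(subsetP xB); rewrite inE => /andP [].
have XAT z : z \in XA -> z \in TA by move/(subsetP xA); rewrite inE => /andP [].
have XBT z : z \in XB -> z \in TB by move/(subsetP xB); rewrite inE => /andP [].
have dis z : z \in A -> z \in B -> False by move=> za zb; exact: (disjointP _ _ d z za zb).
apply/and3P; split.
- exact: setUSS.
- apply/subsetP => x; rewrite !inE negb_or => /andP [/andP [nTA nTB] /orP [xa|xb]].
  + have: x \in A :\: TA by rewrite inE nTA xa.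
    move/(subsetP dA); rewrite inE xa /= => /orP [->//|/existsP [y /andP [yS Exy]]].
    by rewrite ?orbT /=; apply/orP; right; apply/existsP; exists y; rewrite inE yS EAE.
  + have: x \in B :\: TB by rewrite inE nTB xb.
    move/(subsetP dB); rewrite inE xb /= => /orP [->|/existsP [y /andP [yS Exy]]].
      by rewrite !orbT.
    by rewrite !orbT /=; apply/orP; right; apply/existsP; exists y; rewrite inE yS EBE ?orbT.
- apply/existsP; exists set0; rewrite sub0set cards0 eqxx /= setD0.
  have -> : SA :|: SB = ((SA :\: XA) :|: (SB :\: XB)) :|: (XA :|: XB).
    apply/setP => z; rewrite !inE.
    case zXA: (z \in XA); first by rewrite (XAS _ zXA) /= ?orbT.
    case zXB: (z \in XB); first by rewrite (XBS _ zXB) !orbT.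
    by rewrite /= !orbF.
  apply: pm_union.
  + apply/disjointP => z; rewrite !inE => /orP [/andP [nz zs]|/andP [nz zs]] /orP [zx|zx].
    * by rewrite zx in nz.
    * exact: (dis z (inA _ zs) (inB _ (XBS _ zx))).
    * exact: (dis z (inA _ (XAS _ zx)) (inB _ zs)).
    * by rewrite zx in nz.
  + apply: pm_union.
    * apply/disjointP => z; rewrite !inE => /andP [_ z1] /andP [_ z2].
      exact: (dis z (inA _ z1) (inB _ z2)).
    * by apply: (pm_mono _ pA) => x y _ _; apply: EAE.
    * by apply: (pm_mono _ pB) => x y _ _; apply: EBE.
  + apply: (pm_cross (TA := TA) (TB := TB) _ cA cB).
    * by move=> x y xt yt; rewrite hE xt yt !orbT.
    * by apply/subsetP => z /XAT.
    * by apply/subsetP => z /XBT.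
    * apply/disjointP => z z1 z2.
      exact: (dis z (inA _ (XAS _ z1)) (inB _ (XBS _ z2))).
Qed.

Lemma partner (V : finType) (A B TA TB : {set V}) (EA EB E : rel V) (S : {set V}) (M : {set {set V}}) x :
  setting A B TA TB EA EB E -> S \subset A :|: B -> ispm E S M ->
  x \in Xof M A S -> x \in TA /\ exists y, [/\ y \in Xof M B S, y \in TB & [set x; y] \in M].
Proof.
case=> d sTA sTB [hA hB hE] sS pm.
have dis z : z \in A -> z \in B -> False by move=> za zb; exact: (disjointP _ _ d z za zb).
rewrite inE => /andP [/setIP [xS xA] /forallP nx].
have [e eM xe] := pm_ex pm xS.
have [a [b [aS bS nab Eab ee]]] := (proj1 (iffLR (ispmP _ _ _) pm)) e eM.
have [y [yS Exy exy]] : exists y, [/\ y \in S, E x y || E y x & e = [set x; y]].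
  move: xe; rewrite ee !inE => /orP [] /eqP xab; subst x.
  - by exists b; rewrite Eab.
  - by exists a; rewrite Eab orbT setUC.
have neA : ~~ (e \subset A).
  apply/negP => eA; move: (nx e); rewrite inE eM eA /= => /negP; exact.
have yA : y \in A -> False.
  move=> yA; move/negP: neA; apply; rewrite exy; apply/subsetP => z; rewrite !inE.
  by case/orP => /eqP ->.
have [xTA yTB] : x \in TA /\ y \in TB.
  case/orP: Exy; rewrite hE.
  - case/or3P => [/hA /andP [_ /yA] //|/hB /andP [/(dis x xA) //]|].
    case/orP => /andP [] // _ /(subsetP sTB) /(dis x xA) //.
  - case/or3P => [/hA /andP [/yA] //|/hB /andP [_ /(dis x xA)] //|].
    case/orP => /andP [] //; move=> /(subsetP sTA) /yA //.
split=> //; exists y; split=> //; last by rewrite -exy.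
rewrite inE in_setI yS (subsetP sTB _ yTB) /=; apply/forallP => e'; apply/implyP.
rewrite inE => /andP [e'M e'B]; apply/negP => ye'.
have ye : y \in e by rewrite exy !inE eqxx orbT.
have := pm_uniq pm yS eM e'M ye ye'; move=> eq; subst e'.
exact: (dis x xA (subsetP e'B _ xe)).
Qed.

Lemma side_feas (V : finType) (A B TA TB : {set V}) (EA EB E : rel V) (S : {set V}) (M : {set {set V}}) :
  setting A B TA TB EA EB E -> S \subset A :|: B -> ispm E S M ->
  (A :|: B) :\: (TA :|: TB) \subset [set x in A :|: B | (x \in S) || [exists y in S, E x y]] ->
  feas A TA EA #|Xof M A S| (S :&: A).
Proof.
move=> st sS pm dS.
have st' := st; case: st' => d sTA sTB [hA hB hE].
have dis z : z \in A -> z \in B -> False by move=> za zb; exact: (disjointP _ _ d z za zb).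
apply/and3P; split.
- exact: subsetIr.
- apply/subsetP => x; rewrite !inE => /andP [nTA xA].
  have: x \in (A :|: B) :\: (TA :|: TB).
    rewrite !inE xA /= negb_or nTA /= andbT; apply/negP => /(subsetP sTB) /(dis x xA) //.
  move/(subsetP dS); rewrite !inE xA /= => /orP [->//|/existsP [y /andP [yS Exy]]].
  apply/orP; right; apply/existsP; exists y; rewrite !inE yS /=.
  move: Exy; rewrite hE => /or3P [/[dup] /hA /andP [_ ->] -> //|/hB /andP [/(dis x xA)] //|].
  case/orP => /andP [xt yt]; first by rewrite xt in nTA.
  by move: (subsetP sTB _ yt) => /(dis x xA).
- apply/existsP; exists (Xof M A S); rewrite eqxx /=; apply/andP; split.
    apply/subsetP => x xX; have [xT _] := partner st sS pm xX.
    by move: xX; rewrite !inE xT => /andP [/andP [-> ->]].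
  rewrite has_pmE; apply/existsP; exists (Mpart M A); apply/ispmP.
  have [a1 b1] := iffLR (ispmP _ _ _) pm.
  split.
  + move=> e; rewrite inE => /andP [eM eA].
    have [x [y [xS yS nxy Exy ee]]] := a1 e eM.
    have xe : x \in e by rewrite ee !inE eqxx.
    have ye : y \in e by rewrite ee !inE eqxx orbT.
    have xA := subsetP eA _ xe; have yA := subsetP eA _ ye.
    have notX z : z \in e -> z \notin Xof M A S.
      move=> ze; rewrite inE; apply/negP => /andP [_ /forallP /(_ e)].
      by rewrite inE eM eA /= ze.
    exists x, y; split=> //.
    * by rewrite in_setD notX //= in_setI xS xA.
    * by rewrite in_setD notX //= in_setI yS yA.
    * move: Exy; rewrite hE => /or3P [//|/hB /andP [/(dis x xA)] //|].
      case/orP => /andP [_ /(subsetP sTB)]; [move/(dis y yA) | move/(dis x xA)]; done.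
  + move=> w; rewrite inE => /andP [nwX /setIP [wS wA]].
    have [e eM we] : exists2 e, e \in Mpart M A & w \in e.
      move: nwX; rewrite inE in_setI wS wA /= => /forallPn [e].
      by rewrite negb_imply negbK => /andP [eM we]; exists e.
    apply/eqP; rewrite eqn_leq; apply/andP; split.
      rewrite -(b1 w wS); apply: subset_leq_card; apply/subsetP => e'.
      by rewrite !inE => /andP [/andP [-> _] ->].
    by rewrite card_gt0; apply/set0Pn; exists e; rewrite inE eM we.
Qed.

Lemma side_card (V : finType) (A B TA TB : {set V}) (EA EB E : rel V) (S : {set V}) (M : {set {set V}}) :
  setting A B TA TB EA EB E -> S \subset A :|: B -> ispm E S M ->
  #|Xof M A S| <= #|Xof M B S|.
Proof.
move=> st sS pm.
have st' := st; case: st' => d sTA sTB [hA hB hE].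
have dis z : z \in A -> z \in B -> False by move=> za zb; exact: (disjointP _ _ d z za zb).
pose f x := odflt x [pick y in Xof M B S | [set x; y] \in M].
have fP x : x \in Xof M A S -> f x \in Xof M B S /\ [set x; f x] \in M.
  move=> xX; have [_ [y [yX _ yM]]] := partner st sS pm xX.
  rewrite /f; case: pickP => [z /andP [-> ->] //|/(_ y)].
  by rewrite yX yM.
have XA z : z \in Xof M A S -> z \in A by rewrite !inE => /andP [/andP [_ ->]].
have XB z : z \in Xof M B S -> z \in B by rewrite !inE => /andP [/andP [_ ->]].
have XS z : z \in Xof M B S -> z \in S by rewrite !inE => /andP [/andP [-> _]].
rewrite -(card_in_imset (f := f)).
  apply: subset_leq_card; apply/subsetP => z /imsetP [x xX ->]; exact: (proj1 (fP x xX)).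
move=> x1 x2 x1X x2X eqf.
have [f1 m1] := fP x1 x1X; have [f2 m2] := fP x2 x2X.
rewrite -eqf in m2.
have e12 : [set x1; f x1] = [set x2; f x1] by apply: (pm_uniq pm (XS _ f1) m1 m2); rewrite !inE eqxx ?orbT.
have : x1 \in [set x2; f x1] by rewrite -e12 !inE eqxx.
rewrite !inE => /orP [/eqP //|/eqP h].
by exfalso; apply: (dis x1 (XA _ x1X)); rewrite h; apply: XB.
Qed.

Lemma bigmin_le (I : eqType) (s : seq I) (P : pred I) (F : I -> nat) idx j :
  j \in s -> P j -> \big[minn/idx]_(i <- s | P i) F i <= F j.
Proof.
elim: s => //= a s IH; rewrite in_cons big_cons => /orP[/eqP <-|js] Pj.
  by rewrite Pj geq_minl.
case: (P a); last exact: IH.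
by rewrite geq_min IH ?orbT.
Qed.

Lemma gamma_le (V : finType) (u : dtree V) k S :
  feasible u k S -> exists m, gamma u k = Some m /\ m <= #|S|.
Proof.
move=> fS; rewrite /gamma.
have ->: [exists S, feasible u k S] by apply/existsP; exists S.
eexists; split; first reflexivity.
by apply: bigmin_le => //; rewrite mem_index_enum.
Qed.

Lemma gamma_some (V : finType) (u : dtree V) k m :
  gamma u k = Some m -> exists S, feasible u k S /\ #|S| = m.
Proof.
rewrite /gamma; case: existsP => // -[S0 fS0] [<-].
set b := \big[_/_]_(_ | _) _.
have hb: b <= #|S0| by rewrite /b; apply: bigmin_le => //; rewrite mem_index_enum.
have: (exists S, feasible u k S /\ #|S| = b) \/ #|V| <= b.
  rewrite /b; apply: (big_ind (fun x => (exists S, feasible u k S /\ #|S| = x) \/ #|V| <= x)).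
  - by right.
  - move=> x y [[Sx [fx <-]]|hx] [[Sy [fy <-]]|hy].
    + by left; case: (leqP #|Sx| #|Sy|) => h; [exists Sx | exists Sy].
    + left; exists Sx; split=> //; apply/esym/minn_idPl; exact: leq_trans (max_card _) hy.
    + left; exists Sy; split=> //; apply/esym/minn_idPr; exact: leq_trans (max_card _) hx.
    + by right; rewrite leq_min hx hy.
  - by move=> S fS; left; exists S.
case=> // h; exists S0; split=> //; apply/eqP; rewrite eqn_leq hb andbT.
exact: leq_trans (max_card _) h.
Qed.

Lemma foldr_omin_some (l : seq (option nat)) m :
  foldr omin None l = Some m -> Some m \in l.
Proof.
elim: l m => //= a l IH m.
case: a => [a|]; case E: (foldr omin None l) => [b|] //=.
- move=> [<-]; case: (leqP a b) => h.
  + by rewrite mem_head.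
  + by rewrite in_cons (IH _ E) orbT.
- by move=> [<-]; rewrite mem_head.
- by move=> [<-]; rewrite in_cons (IH _ E) orbT.
Qed.

Lemma foldr_omin_le (l : seq (option nat)) n :
  Some n \in l -> exists m, foldr omin None l = Some m /\ m <= n.
Proof.
elim: l => //= a l IH; rewrite in_cons => /orP [/eqP <-|/IH [m [-> h]]].
- case: (foldr omin None l) => [b|] /=; eexists; split; try reflexivity.
  + exact: geq_minl.
  + done.
- case: a => [a|] /=; eexists; split; try reflexivity; last done.
  by rewrite geq_min h orbT.
Qed.

Lemma hV_node (V : finType) o (l r : dtree V) : hV (Node o l r) = hV l :|: hV r.
Proof. by apply/setP => x; rewrite !inE /= mem_cat. Qed.

Lemma hTS_sub (V : finType) (t : dtree V) : hTS t \subset hV t.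
Proof.
elim: t => [x|o l IHl r IHr]; first by apply/subsetP => z; rewrite !inE.
rewrite hV_node; case: o => /=; try exact: setUSS.
exact: subset_trans IHl (subsetUl _ _).
Qed.

Lemma hE_in (V : finType) (t : dtree V) x y : hE t x y -> (x \in hV t) && (y \in hV t).
Proof.
elim: t x y => [z|o l IHl r IHr] x y //=.
rewrite hV_node !in_setU.
case/or3P => [/IHl /andP [-> ->] //|/IHr /andP [-> ->]|/andP [_ /orP [] /andP [a b]]].
- by rewrite !orbT.
- by rewrite (subsetP (hTS_sub l) _ a) (subsetP (hTS_sub r) _ b) orbT.
- by rewrite (subsetP (hTS_sub l) _ a) (subsetP (hTS_sub r) _ b) orbT.
Qed.

Lemma sub_uniq (V : finType) (s t : dtree V) : is_subtree s t -> uniq (leaves t) -> uniq (leaves s).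
Proof.
elim: t => [x|o l IHl r IHr] /=; first by case=> [->|[]].
case=> [->//|[h|h]] u; move: u; rewrite cat_uniq => /and3P [u1 _ u2]; auto.
Qed.

Lemma feasibleE (V : finType) (l r : dtree V) k S :
  feasible (Node OTrue l r) k S = feas (hV l :|: hV r) (hTS l :|: hTS r) (hE (Node OTrue l r)) k S.
Proof. by rewrite /feasible /closedN /feas hV_node. Qed.

Lemma feas_k (V : finType) (A TA : {set V}) E k S : feas A TA E k S -> k <= #|TA|.
Proof.
case/and3P => _ _ /existsP [X /and3P [sX /eqP <- _]].
apply: subset_leq_card; exact: subset_trans sX (subsetIr _ _).
Qed.

Theorem lemma11 (V : finType) (G : rel V) (T vl vr : dtree V) :
  symmetric G -> irreflexive G -> distance_hereditary G ->
  decomp_tree G T ->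
  is_subtree (Node OTrue vl vr) T ->
  propP vl -> propP vr ->
  gamma (Node OTrue vl vr) 0 =
  foldr omin None
    [seq oadd (gamma vl i) (gamma vr i) | i <- iota 0 (minn #|hTS vl| #|hTS vr|).+1].
Proof.
move=> _ _ _ [uT [_ _]] sub _ _.
have u := sub_uniq sub uT; rewrite /= cat_uniq in u.
case/and3P: u => _ /hasPn hu _.
have d : [disjoint hV vl & hV vr].
  by apply/disjointP => z; rewrite !inE => z1 z2; move: (hu z z2); rewrite /= z1.
have st : setting (hV vl) (hV vr) (hTS vl) (hTS vr) (hE vl) (hE vr) (hE (Node OTrue vl vr)).
  split=> //; try exact: hTS_sub; split; try exact: hE_in; done.
set v := Node OTrue vl vr.
set RHS := foldr omin None _.
have key1 m : gamma v 0 = Some m -> exists m', RHS = Some m' /\ m' <= m.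
  case/gamma_some => S [fS <-]; move: fS; rewrite feasibleE.
  case/and3P => sS dS /existsP [X /and3P [sX /eqP c0 pmX]].
  move/eqP: c0; rewrite cards_eq0 => /eqP X0; subst X; rewrite setD0 has_pmE in pmX.
  case/existsP: pmX => M pm.
  have fA := side_feas st sS pm dS.
  have st' := setting_sym st.
  have sS' : S \subset hV vr :|: hV vl by rewrite setUC.
  have dS' : (hV vr :|: hV vl) :\: (hTS vr :|: hTS vl) \subset
     [set x in hV vr :|: hV vl | (x \in S) || [exists y in S, hE v x y]].
    by rewrite setUC [hTS vr :|: _]setUC.
  have fB := side_feas st' sS' pm dS'.
  have cAB := side_card st sS pm; have cBA := side_card st' sS' pm.
  have eqc : #|Xof M (hV vr) S| = #|Xof M (hV vl) S| by apply/eqP; rewrite eqn_leq cAB cBA.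
  rewrite eqc in fB.
  have [a [ga la]] := gamma_le (u := vl) (k := #|Xof M (hV vl) S|) (S := S :&: hV vl) fA.
  have [b [gb lb]] := gamma_le (u := vr) (k := #|Xof M (hV vl) S|) (S := S :&: hV vr) fB.
  have : Some (a + b) \in [seq oadd (gamma vl i) (gamma vr i) | i <- iota 0 (minn #|hTS vl| #|hTS vr|).+1].
    apply/mapP; exists #|Xof M (hV vl) S|; last by rewrite ga gb.
    by rewrite mem_iota /= add0n ltnS leq_min (feas_k fA) (feas_k fB).
  case/foldr_omin_le => m' [e le]; exists m'; split; first exact: e.
  apply: (leq_trans le); rewrite -(cardsID (hV vl) S).
  have -> : S :\: hV vl = S :&: hV vr.
    apply/setP => z; rewrite in_setD in_setI; case zS: (z \in S) => /=; rewrite ?andbF ?andbT //.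
    move: (subsetP sS _ zS); rewrite in_setU => /orP [z1|z2].
      by rewrite z1 /=; apply/esym/negP => z2; exact: (disjointP _ _ d z z1 z2).
    by rewrite z2; apply/negP => z1; exact: (disjointP _ _ d z z1 z2).
  exact: leq_add.
have key2 m : RHS = Some m -> exists m', gamma v 0 = Some m' /\ m' <= m.
  move/foldr_omin_some/mapP => [i _].
  case ga: (gamma vl i) => [a|] //; case gb: (gamma vr i) => [b|] //= [->].
  have [SA [fA <-]] := gamma_some ga; have [SB [fB <-]] := gamma_some gb.
  have fS : feasible v 0 (SA :|: SB) by rewrite feasibleE; exact: (build st fA fB).
  have [m' [-> le]] := gamma_le fS; exists m'; split=> //.
  apply: (leq_trans le); rewrite -cardsUI; exact: leq_addr.
case E1: (gamma v 0) => [m|]; case E2: RHS => [n|].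
- have [m' [e1 l1]] := key1 m E1; have [n' [e2 l2]] := key2 n E2.
  rewrite E2 in e1; rewrite E1 in e2; case: e1 => e1; case: e2 => e2; subst.
  by congr Some; apply/eqP; rewrite eqn_leq l1 l2.
- by have [m' [e1 _]] := key1 m E1; rewrite E2 in e1.
- by have [m' [e1 _]] := key2 n E2; rewrite E1 in e1.
- by [].
Qed.
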